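(* Let $m$ be an odd positive integer and let $a,d_1,d_2\in\mathbb{Z}/m\mathbb{Z}$ be such that $d_1$, $d_2$ and $d_2-d_1$ are all invertible. Then the arithmetic triangle $\mathrm{AT}(a,d_1,d_2,n)$ is balanced for all non-negative integers $n\equiv0$ or $n\equiv-1\pmod m$.
   Context: The arithmetic triangle $\mathrm{AT}(a,d_1,d_2,n)$ is the family $(a+id_2+jd_1)_{(i,j)\in\mathbb{N}^2,\,i+j<n}$ of elements of $\mathbb{Z}/m\mathbb{Z}$. It is balanced if every element of $\mathbb{Z}/m\mathbb{Z}$ occurs the same number of times in it. *)

(* Defs.v *)
(* Elements of Z/mZ are represented by integers, compared modulo m. *)
From mathcomp Require Import all_boot all_order all_algebra.
Set Implicit Arguments. Unset Strict Implicit. Unset Printing Implicit Defensive.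
Import Order.TTheory GRing.Theory Num.Theory.
Local Open Scope ring_scope.

Definition AT_count (m : nat) (a d1 d2 : int) (n : nat) (x : int) : nat :=
  (\sum_(i < n) \sum_(j < n - i)
     ((a + (i%:Z) * d2 + (j%:Z) * d1 == x %[mod (m%:Z)])%Z : nat))%N.

Definition AT_balanced (m : nat) (a d1 d2 : int) (n : nat) : Prop :=
  forall x y : int, AT_count m a d1 d2 n x = AT_count m a d1 d2 n y.

(* Main.v *)
Require Import Defs.
From mathcomp Require Import all_boot all_order all_algebra.
From mathcomp Require Import zify ring.
Set Implicit Arguments. Unset Strict Implicit. Unset Printing Implicit Defensive.
Import Order.TTheory GRing.Theory Num.Theory.
Local Open Scope ring_scope.

Lemma line (m : nat) (u c x : int) (G : nat -> int) :
  (0 < m)%N -> coprimez u m ->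
  (forall k, (k < m)%N -> (G k == c + k%:Z * u %[mod m%:Z])%Z) ->
  (\sum_(k < m) ((G k == x %[mod m%:Z])%Z : nat))%N = 1%N.
Proof.
move=> m0 cop HG.
have lt z : (absz (z %% m%:Z)%Z < m)%N by lia.
pose phi (k : 'I_m) : 'I_m := Ordinal (lt (G k)).
pose xi : 'I_m := Ordinal (lt x).
have phiinj : injective phi.
  move=> k1 k2 /(congr1 val) /= H.
  have := HG _ (ltn_ord k1); have := HG _ (ltn_ord k2).
  rewrite !eqz_mod_dvd => H2 H1.
  have : (m%:Z %| (k1%:Z - k2%:Z) * u)%Z.
    have -> : (k1%:Z - k2%:Z) * u = (G k1 - G k2) - (G k1 - (c + k1%:Z * u)) + (G k2 - (c + k2%:Z * u)) by ring.
    apply: rpredD; [apply: rpredB|] => //.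
    by rewrite -eqz_mod_dvd; apply/eqP; lia.
  rewrite Gauss_dvdzl; last by rewrite coprimez_sym.
  rewrite -eqz_mod_dvd !modz_small; last 2 first.
  - by rewrite lez_nat ltz_nat ltn_ord.
  - by rewrite lez_nat ltz_nat ltn_ord.
  by move=> /eqP [] H3; apply: val_inj.
transitivity (\sum_(k < m) ((phi k == xi) : nat))%N.
  apply: eq_bigr => k _; congr nat_of_bool.
  rewrite -(inj_eq val_inj) /=. apply/eqP/eqP; lia.
rewrite -(@reindex_inj _ _ _ _ phi xpredT (fun k => ((k == xi) : nat)) phiinj) /=.
by rewrite (bigD1 xi) //= eqxx big1 // => k /negbTE ->.
Qed.

Definition colsum (m : nat) (c u x : int) (L : nat) : nat :=
  (\sum_(j < L) ((c + j%:Z * u == x %[mod m%:Z])%Z : nat))%N.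

Lemma shiftm (m : nat) (c u x : int) (k : nat) :
  (c + (m + k)%:Z * u == x %[mod m%:Z])%Z = (c + k%:Z * u == x %[mod m%:Z])%Z.
Proof.
have -> : c + (m + k)%:Z * u = u * m%:Z + (c + k%:Z * u) by rewrite PoszD; ring.
by rewrite /= modzMDl.
Qed.

Lemma period (m : nat) (c u x : int) (p L : nat) :
  (0 < m)%N -> coprimez u m -> colsum m c u x (p * m + L) = (p + colsum m c u x L)%N.
Proof.
move=> m0 cop; elim: p => [|p IH] //.
rewrite /colsum mulSn -addnA big_split_ord /=.
rewrite (@line m u c x (fun k => c + k%:Z * u)) //.
rewrite -/(colsum m c u x L) [RHS]addSn -IH /colsum add1n; congr (_.+1).
by apply: eq_bigr => k _; rewrite shiftm.
Qed.

Lemma AT_colsum m a d1 d2 n x :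
  AT_count m a d1 d2 n x = (\sum_(i < n) colsum m (a + i%:Z * d2) d1 x (n - i))%N.
Proof. by []. Qed.

Lemma at_shift m a d1 d2 n x :
  AT_count m a d1 d2 (m + n) x =
  (\sum_(i < m) colsum m (a + i%:Z * d2) d1 x (m + n - i) + AT_count m a d1 d2 n x)%N.
Proof.
rewrite !AT_colsum big_split_ord /=; congr (_ + _)%N.
apply: eq_bigr => i _; rewrite subnDl /colsum; apply: eq_bigr => j _.
by rewrite -addrA (addrC (_ * d2)) addrA shiftm -addrA (addrC (_ * d1)) addrA.
Qed.

Lemma lastcol m' a d1 d2 x :
  (\sum_(i < m'.+1) colsum m'.+1 (a + i%:Z * d2) d1 x (m' - i))%N = AT_count m'.+1 a d1 d2 m' x.
Proof.
rewrite big_ord_recr /= subnn /colsum big_ord0 addn0 AT_colsum.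
by apply: eq_bigr.
Qed.

Lemma regionA m a d1 d2 x p :
  (0 < m)%N -> coprimez d1 m ->
  (\sum_(i < m) colsum m (a + i%:Z * d2) d1 x (m + p * m - i))%N =
  (p * m + AT_count m a d1 d2 m x)%N.
Proof.
move=> m0 cop; rewrite AT_colsum.
rewrite (eq_bigr (fun i : 'I_m => p + colsum m (a + i%:Z * d2) d1 x (m - i)))%N.
  by rewrite big_split /= sum_nat_const card_ord mulnC.
move=> i _; rewrite addnC -addnBA; last exact: ltnW.
by rewrite period.
Qed.

Lemma regionB m' a d1 d2 x p :
  coprimez d1 m'.+1 ->
  (\sum_(i < m'.+1) colsum m'.+1 (a + i%:Z * d2) d1 x (m'.+1 + (p * m'.+1 + m') - i))%N =
  (p.+1 * m'.+1 + AT_count m'.+1 a d1 d2 m' x)%N.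
Proof.
move=> cop; rewrite -lastcol.
rewrite (eq_bigr (fun i : 'I_m'.+1 => p.+1 + colsum m'.+1 (a + i%:Z * d2) d1 x (m' - i)))%N.
  by rewrite big_split /= sum_nat_const card_ord mulnC.
move=> i _; rewrite addnA -mulSn -addnBA; last by rewrite -ltnS.
by rewrite period.
Qed.

Lemma diagonal m' a d1 d2 x :
  coprimez (d2 - d1) m'.+1 ->
  AT_count m'.+1 a d1 d2 m'.+1 x = (AT_count m'.+1 a d1 d2 m' x + 1)%N.
Proof.
move=> cop; rewrite -lastcol AT_colsum.
rewrite (eq_bigr (fun i : 'I_m'.+1 => colsum m'.+1 (a + i%:Z * d2) d1 x (m' - i)
     + ((a + i%:Z * d2 + (m' - i)%N%:Z * d1 == x %[mod m'.+1%:Z])%Z : nat)))%N.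
  rewrite big_split /=; congr (_ + _)%N.
  apply: (@line m'.+1 (d2 - d1) (a + m'%:Z * d1) x (fun i => a + i%:Z * d2 + (m' - i)%N%:Z * d1)) => // k.
  rewrite ltnS => km; rewrite -subzn //.
  by apply/eqP; congr (_ %% _)%Z; ring.
move=> i _; rewrite subSn; last by rewrite -ltnS.
by rewrite /colsum big_ord_recr.
Qed.

Definition Fc m a d1 d2 x (i j : nat) : nat :=
  ((a + i%:Z * d2 + j%:Z * d1 == x %[mod m%:Z])%Z : nat).
Definition Kc m a d1 d2 x : nat :=
  (\sum_(i < m) \sum_(j < m) Fc m a d1 d2 x i j * (m <= i + j))%N.
Definition Sm m : nat := (\sum_(k < m) k)%N.

Lemma rowsum m a d1 d2 x i : (0 < m)%N -> coprimez d1 m ->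
  (\sum_(j < m) Fc m a d1 d2 x i j)%N = 1%N.
Proof.
move=> m0 cop.
exact: (@line m d1 (a + i%:Z * d2) x (fun j => a + i%:Z * d2 + j%:Z * d1)).
Qed.

Lemma colsum1 m a d1 d2 x j : (0 < m)%N -> coprimez d2 m ->
  (\sum_(i < m) Fc m a d1 d2 x i j)%N = 1%N.
Proof.
move=> m0 cop.
apply: (@line m d2 (a + j%:Z * d1) x (fun i => a + i%:Z * d2 + j%:Z * d1)) => // k _.
by apply/eqP; congr (_ %% _)%Z; ring.
Qed.

Lemma part1 m a d1 d2 x : (0 < m)%N -> coprimez d1 m ->
  (AT_count m a d1 d2 m x + Kc m a d1 d2 x)%N = m.
Proof.
move=> m0 cop.
have -> : AT_count m a d1 d2 m x =
   (\sum_(i < m) \sum_(j < m) Fc m a d1 d2 x i j * (i + j < m))%N.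
  apply: eq_bigr => i _.
  rewrite (big_ord_widen m (fun j => Fc m a d1 d2 x i j)) ?leq_subr // big_mkcond /=.
  apply: eq_bigr => j _; rewrite ltn_subRL.
  by case: (i + j < m)%N; rewrite ?muln1 ?muln0.
rewrite /Kc -big_split /=.
rewrite (eq_bigr (fun i => 1%N)); first by rewrite sum_nat_const card_ord muln1.
move=> i _; rewrite -big_split /= -(@rowsum m a d1 d2 x i m0 cop).
apply: eq_bigr => j _; rewrite -mulnDr.
by rewrite ltnNge; case: (m <= i + j)%N; rewrite ?muln1 ?muln0.
Qed.

Lemma partA m a d1 d2 x : (0 < m)%N -> coprimez d1 m -> coprimez d2 m ->
  (\sum_(i < m) \sum_(j < m) Fc m a d1 d2 x i j * (i + j))%N = (Sm m + Sm m)%N.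
Proof.
move=> m0 c1 c2.
rewrite (eq_bigr (fun i : 'I_m => \sum_(j < m) Fc m a d1 d2 x i j * i +
                                   \sum_(j < m) Fc m a d1 d2 x i j * j))%N; last first.
  by move=> i _; rewrite -big_split /=; apply: eq_bigr => j _; rewrite mulnDr.
rewrite big_split /=; congr (_ + _)%N.
  apply: eq_bigr => i _; by rewrite -big_distrl /= (@rowsum m a d1 d2 x i m0 c1) mul1n.
rewrite exchange_big /=; apply: eq_bigr => j _.
by rewrite -big_distrl /= (@colsum1 m a d1 d2 x j m0 c2) mul1n.
Qed.

Lemma partAB m a d1 d2 x :
  (\sum_(i < m) \sum_(j < m) Fc m a d1 d2 x i j * (i + j))%N =
  (\sum_(i < m) \sum_(j < m) Fc m a d1 d2 x i j * ((i + j) %% m) + m * Kc m a d1 d2 x)%N.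
Proof.
rewrite /Kc big_distrr -big_split /=; apply: eq_bigr => i _.
rewrite big_distrr -big_split /=; apply: eq_bigr => j _.
rewrite mulnCA -mulnDr; congr (_ * _)%N.
have hi := ltn_ord i; have hj := ltn_ord j.
case: leqP => h.
  have -> : (i + j = (i + j - m) + m)%N by lia.
  by rewrite modnDr modn_small ?muln1; lia.
by rewrite modn_small ?muln0 ?addn0.
Qed.

Lemma partB m a d1 d2 x : (0 < m)%N -> coprimez (d2 - d1) m ->
  (\sum_(i < m) \sum_(j < m) Fc m a d1 d2 x i j * ((i + j) %% m))%N = Sm m.
Proof.
move=> m0 c3.
have step (i : 'I_m) : (\sum_(j < m) Fc m a d1 d2 x i j * ((i + j) %% m))%N =
    (\sum_(k < m) Fc m a d1 d2 x i ((k + (m - i)) %% m) * k)%N.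
  pose h (j : 'I_m) : 'I_m := Ordinal (ltn_pmod (i + j) m0).
  have hinj : injective h.
    move=> j1 j2 /(congr1 val) /= /eqP; rewrite eqn_modDl !modn_small // => /eqP H.
    exact: val_inj.
  rewrite (@reindex_inj _ _ _ _ h xpredT (fun k : 'I_m => Fc m a d1 d2 x i ((k + (m - i)) %% m) * k)%N hinj) /=.
  apply: eq_bigr => j _; congr (Fc _ _ _ _ _ _ _ * _)%N.
  rewrite modnDml.
  have -> : (i + j + (m - i) = j + m)%N by have := ltn_ord i; lia.
  by rewrite modnDr modn_small.
rewrite (eq_bigr _ (fun i _ => step i)) exchange_big /=.
apply: eq_bigr => k _; rewrite -big_distrl /=.
suff -> : (\sum_(i < m) Fc m a d1 d2 x i ((k + (m - i)) %% m))%N = 1%N by rewrite mul1n.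
apply: (@line m (d2 - d1) (a + k%:Z * d1) x
  (fun i => a + i%:Z * d2 + ((k + (m - i)) %% m)%N%:Z * d1)) => // i im.
set z := (k + (m - i))%N.
have e1 : (z %% m)%N%:Z = z%:Z - (z%:Z %/ m%:Z)%Z * m%:Z.
  by rewrite -modz_nat {2}(divz_eq z m); ring.
have e2 : z%:Z = k%:Z + m%:Z - i%:Z by rewrite /z PoszD -subzn ?addrA // ltnW.
rewrite e1; set q := (_ %/ _)%Z; rewrite e2 eqz_mod_dvd.
have -> : a + i%:Z * d2 + (k%:Z + m%:Z - i%:Z - q * m%:Z) * d1 -
   (a + k%:Z * d1 + i%:Z * (d2 - d1)) = m%:Z * (d1 - q * d1) by ring.
by apply: dvdz_mulr; apply: dvdzz.
Qed.

Lemma part2 m a d1 d2 x : (0 < m)%N -> coprimez d1 m -> coprimez d2 m -> coprimez (d2 - d1) m ->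
  (m * Kc m a d1 d2 x)%N = Sm m.
Proof.
move=> m0 c1 c2 c3.
have := partAB m a d1 d2 x.
rewrite partA // partB // => /addnI; done.
Qed.

Lemma core m a d1 d2 x y : (0 < m)%N -> coprimez d1 m -> coprimez d2 m -> coprimez (d2 - d1) m ->
  AT_count m a d1 d2 m x = AT_count m a d1 d2 m y.
Proof.
move=> m0 c1 c2 c3.
have Kxy : Kc m a d1 d2 x = Kc m a d1 d2 y.
  apply/eqP; by rewrite -(eqn_pmul2l m0) !part2.
have := @part1 m a d1 d2 x m0 c1; have := @part1 m a d1 d2 y m0 c1.
rewrite Kxy; lia.
Qed.

Lemma caseA m a d1 d2 p x y : (0 < m)%N -> coprimez d1 m -> coprimez d2 m -> coprimez (d2 - d1) m ->
  AT_count m a d1 d2 (p * m) x = AT_count m a d1 d2 (p * m) y.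
Proof.
move=> m0 c1 c2 c3; elim: p => [|p IH]; first by rewrite mul0n /AT_count !big_ord0.
rewrite mulSn !at_shift !regionA // IH (@core m a d1 d2 x y) //.
Qed.

Lemma caseB m' a d1 d2 q x y : coprimez d1 m'.+1 -> coprimez d2 m'.+1 -> coprimez (d2 - d1) m'.+1 ->
  AT_count m'.+1 a d1 d2 (q * m'.+1 + m') x = AT_count m'.+1 a d1 d2 (q * m'.+1 + m') y.
Proof.
move=> c1 c2 c3.
have hB : AT_count m'.+1 a d1 d2 m' x = AT_count m'.+1 a d1 d2 m' y.
  have := @core m'.+1 a d1 d2 x y isT c1 c2 c3.
  by rewrite !diagonal // => /addIn.
elim: q => [|q IH]; first by rewrite mul0n add0n.
by rewrite mulSn -addnA !at_shift !regionB // IH hB.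
Qed.

Theorem theorem14 (m : nat) (a d1 d2 : int) :
  (0 < m)%N -> odd m ->
  coprimez d1 (m%:Z) -> coprimez d2 (m%:Z) -> coprimez (d2 - d1)%R (m%:Z) ->
  forall n : nat, (n %% m = 0 \/ n.+1 %% m = 0)%N -> AT_balanced m a d1 d2 n.
Proof.
move=> m0 _ c1 c2 c3 n [H|H] x y.
  by rewrite (divn_eq n m) H addn0 (@caseA m a d1 d2 _ x y).
case: m m0 c1 c2 c3 H => [//|m'] _ c1 c2 c3 H.
have := divn_eq n.+1 m'.+1; rewrite H addn0.
case E: (n.+1 %/ m'.+1)%N => [|q]; first by rewrite mul0n.
rewrite mulSn => /eqP.
move=> /eqP En; have -> : n = (q * m'.+1 + m')%N by lia.
exact: caseB.
Qed.
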